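(* Let $\mathcal G=(\mathcal V,\mathcal E)$ be a finite digraph with vertices $v_1,\dots,v_N$, run the synchronous dynamics described in the context, let $K=\min\{k\ge 1: w_i[k]=\text{True for all } i=1,\dots,N\}$ and set $\mathcal S_i^*=z_i[K]$. Then $K$ exists, and for every $i$, $\mathcal S_i^*$ is the vertex set of the strongly connected component of $\mathcal G$ containing $v_i$. Consequently, the distinct subgraphs among $(\mathcal S_i^*,(\mathcal S_i^*\times\mathcal S_i^* )\cap\mathcal E)$, $i=1,\dots,N$, are exactly the strongly connected components $\mathcal G_1,\dots,\mathcal G_m$ of $\mathcal G$: their vertex sets are pairwise disjoint, each is a maximal strongly connected subgraph, and $\bigcup_s\mathcal G_s=(\bigcup_s\mathcal V_s,\bigcup_s\mathcal E_s)$ has vertex set $\mathcal V$ and edge set contained in $\mathcal E$.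
   Context: For $v\in\mathcal V$, $\mathcal N^-_{v}=\{u:(u,v)\in\mathcal E\}$ is the set of in-neighbors of $v$. A strongly connected component (SCC) is a maximal set of vertices such that for any two of its vertices there is a directed path from each to the other (a single vertex counts as strongly connected to itself); the SCC as a subgraph has vertex set $\mathcal V_s$ and edge set $(\mathcal V_s\times\mathcal V_s)\cap\mathcal E$. The dynamics are run synchronously by all vertices at every time step $k=0,1,2,\dots$: initialize $x_i[0]=\{v_i\}$, $y_i[0]=1$, $z_i[0]=\emptyset$, $w_i[0]=\text{False}$, and for $k\ge 0$ set $x_i[k+1]=\bigcup_{v_j\in\mathcal N^-_{v_i}\cup\{v_i\}}x_j[k]$; $y_i[k+1]=\max\{\max_{v_j\in\mathcal N^-_{v_i}}|x_j[k]|,\ |x_i[k+1]|\}$ (the inner maximum is omitted if $\mathcal N^-_{v_i}=\emptyset$); $z_i[k+1]=\{v_j:\ y_i[k+1]=y_j[k]\ \text{and}\ v_j\in\bigcup_{v_l\in\mathcal N^-_{v_i}\cup\{v_i\}}x_l[k]\}$; $w_i[k+1]=\text{True}$ if $y_i[k+1]=y_i[k]$ and False otherwise. All vertices keep updating until every vertex has $w_i=\text{True}$. *)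

(* Defs.v *)
From mathcomp Require Import all_boot.
Set Implicit Arguments. Unset Strict Implicit. Unset Printing Implicit Defensive.

Section Dynamics.
Variables (V : finType) (E : rel V).
(* E u v  <->  (u, v) is an edge; in-neighbours of v are the u with E u v. *)

Fixpoint xs (k : nat) (i : V) : {set V} :=
  match k with
  | 0 => [set i]
  | k'.+1 => \bigcup_(j | E j i || (j == i)) xs k' j
  end.

(* y_i[k]; the inner max over an empty in-neighbourhood is 0, i.e. omitted *)
Definition ys (k : nat) (i : V) : nat :=
  match k with
  | 0 => 1
  | k'.+1 => maxn (\max_(j | E j i) #|xs k' j|) #|xs k'.+1 i|
  end.

Definition zs (k : nat) (i : V) : {set V} :=
  match k with
  | 0 => set0
  | k'.+1 => [set j | (ys k'.+1 i == ys k' j) &&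
                      (j \in \bigcup_(l | E l i || (l == i)) xs k' l)]
  end.

Definition ws (k : nat) (i : V) : bool :=
  match k with
  | 0 => false
  | k'.+1 => ys k'.+1 i == ys k' i
  end.

(* strong connectivity of a vertex set: directed paths (in the whole graph)
   both ways between any two of its vertices; connect is the
   reflexive-transitive closure of E *)
Definition strongly_connected (S : {set V}) : Prop :=
  forall u v, u \in S -> v \in S -> connect E u v.

Definition is_scc (S : {set V}) : Prop :=
  S != set0 /\ strongly_connected S /\
  forall T : {set V}, strongly_connected T -> S \subset T -> T = S.

Definition scc_of (v : V) : {set V} :=
  [set u | connect E v u && connect E u v].

End Dynamics.

(* Main.v *)
Require Import Defs.
From mathcomp Require Import all_boot.
Set Implicit Arguments. Unset Strict Implicit. Unset Printing Implicit Defensive.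

Section Aux.
Variables (V : finType) (E : rel V).

Lemma xsS k i : xs E k.+1 i = \bigcup_(j | E j i || (j == i)) xs E k j.
Proof. by []. Qed.

Lemma xs_mono k i : xs E k i \subset xs E k.+1 i.
Proof. rewrite xsS; apply: (bigcup_sup i); by rewrite eqxx orbT. Qed.

Lemma xs_monoN k m i : k <= m -> xs E k i \subset xs E m i.
Proof.
elim: m => [|m IH]; first by rewrite leqn0 => /eqP->.
rewrite leq_eqVlt => /orP[/eqP->//|/IH H]; exact: subset_trans H (xs_mono _ _).
Qed.

Lemma ys_card k i : ys E k i = #|xs E k i|.
Proof.
case: k => [|k] /=; first by rewrite cards1.
apply/maxn_idPr/bigmax_leqP => j Hj; apply: subset_leq_card.
apply: (bigcup_sup j); by rewrite Hj.
Qed.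

Lemma ws_eq k i : ws E k.+1 i = (xs E k.+1 i == xs E k i).
Proof.
rewrite /ws !ys_card; apply/eqP/eqP => [H|->//].
by apply/eqP; rewrite eq_sym eqEcard xs_mono H leqnn.
Qed.

Lemma xs_conn k i u : u \in xs E k i -> connect E u i.
Proof.
elim: k i u => [|k IH] i u /=; first by rewrite inE => /eqP->.
move/bigcupP=> [j /orP[Hj|/eqP->] /IH Hu] //.
apply: connect_trans Hu (connect1 Hj).
Qed.

Lemma xs_step n i y u : y \in xs E n i -> E u y -> u \in xs E n.+1 i.
Proof.
elim: n i => [|n IH] i.
  rewrite inE => /eqP-> Hu; rewrite xsS; apply/bigcupP; exists u; first by rewrite Hu.
  by rewrite inE.
move/bigcupP=> [j Hj Hy] Hu; rewrite xsS; apply/bigcupP; exists j => //; exact: IH.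
Qed.

Lemma conn_xs u i : connect E u i -> exists n, u \in xs E n i.
Proof.
move/connectP=> [p]; elim: p u => [|y p IH] u /=.
  by move=> _ ->; exists 0; rewrite inE.
move=> /andP[Huy Hp] Hl; case: (IH y Hp Hl) => n Hn; exists n.+1; exact: xs_step Hn Huy.
Qed.

Lemma xs_fix k : (forall i, xs E k.+1 i = xs E k i) -> forall m i, xs E (k + m) i = xs E k i.
Proof.
move=> H; elim=> [|m IH] i; first by rewrite addn0.
rewrite addnS xsS -(H i) xsS; apply: eq_bigr => j _; exact: IH.
Qed.

Lemma xs_fix_anc k : (forall i, xs E k.+1 i = xs E k i) ->
  forall i, xs E k i = [set u | connect E u i].
Proof.
move=> H i; apply/setP=> u; rewrite inE; apply/idP/idP; first exact: xs_conn.
move/conn_xs=> [n Hn]; rewrite -(xs_fix H n i).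
by apply: (subsetP (xs_monoN i (leq_addl k n))) Hn.
Qed.

Definition stot k := \sum_i #|xs E k i|.

Lemma stot_bound k : stot k <= #|V| * #|V|.
Proof.
rewrite /stot -sum_nat_const; apply: leq_sum => i _; exact: max_card.
Qed.

Lemma stot_grow n : (forall k, k < n -> ~~ [forall i, ws E k.+1 i]) -> n <= stot n.
Proof.
elim: n => [|n IH] H //.
have IH' : n <= stot n by apply: IH => k Hk; apply: H; exact: ltnW.
apply: leq_ltn_trans IH' _.
have := H n (ltnSn n); rewrite negb_forall => /existsP[i]; rewrite ws_eq => Hi.
rewrite /stot (bigD1 i) //= [X in _ < X](bigD1 i) //= -addSn; apply: leq_add.
  rewrite ltn_neqAle; apply/andP; split; last by apply: subset_leq_card; exact: xs_mono.
  apply: contra Hi => /eqP Hc; by rewrite eq_sym eqEcard xs_mono /= Hc.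
apply: leq_sum => j _; apply: subset_leq_card; exact: xs_mono.
Qed.

Lemma stab_ex : exists k, [forall i, ws E k.+1 i].
Proof.
set n := (#|V| * #|V|).+1.
case: (boolP [exists k : 'I_n, [forall i, ws E k.+1 i]]) => Hb.
  by case/existsP: Hb => k Hk; exists k.
have H : forall k, k < n -> ~~ [forall i, ws E k.+1 i].
  move=> k Hk; apply/negP => Hf; move/negP: Hb; apply; apply/existsP; by exists (Ordinal Hk).
have := leq_trans (stot_grow H) (stot_bound n); by rewrite ltnn.
Qed.

Lemma zs_eq k i : zs E k.+1 i = [set j | (#|xs E k.+1 i| == #|xs E k j|) && (j \in xs E k.+1 i)].
Proof. by apply/setP => j; rewrite !inE !ys_card. Qed.

Lemma scc_in i : i \in scc_of E i.
Proof. by rewrite inE connect0. Qed.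

Lemma scc_eq i j : j \in scc_of E i -> scc_of E j = scc_of E i.
Proof.
rewrite inE => /andP[Hij Hji]; apply/setP => u; rewrite !inE.
apply/andP/andP => [[H1 H2]|[H1 H2]]; split.
- exact: connect_trans Hij H1.
- exact: connect_trans H2 Hji.
- exact: connect_trans Hji H1.
- exact: connect_trans H2 Hij.
Qed.

Lemma scc_is i : is_scc E (scc_of E i).
Proof.
split; first by apply/set0Pn; exists i; exact: scc_in.
split.
  move=> u v; rewrite !inE => /andP[_ Hu] /andP[Hv _]; exact: connect_trans Hu Hv.
move=> T HT Hs; apply/setP => u; apply/idP/idP => Hu; last exact: (subsetP Hs).
have Hi : i \in T by apply: (subsetP Hs); exact: scc_in.
by rewrite inE (HT _ _ Hi Hu) (HT _ _ Hu Hi).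
Qed.

Lemma scc_all S : is_scc E S -> exists i, S = scc_of E i.
Proof.
move=> [/set0Pn [i Hi] [HS Hmax]]; exists i.
have Hsub : S \subset scc_of E i.
  by apply/subsetP => u Hu; rewrite inE (HS _ _ Hi Hu) (HS _ _ Hu Hi).
have [_ [Hsc _]] := scc_is i.
by rewrite (Hmax _ Hsc Hsub).
Qed.

Lemma scc_dis i j : scc_of E i = scc_of E j \/ [disjoint scc_of E i & scc_of E j].
Proof.
case Hd: [disjoint scc_of E i & scc_of E j]; [by right|left].
move/negbT/pred0Pn: Hd => [x /andP[Hxi Hxj]].
by rewrite -(scc_eq Hxi) -(scc_eq Hxj).
Qed.

End Aux.

Theorem theorem1 (V : finType) (E : rel V) :
  exists K : nat,
    (* K = min { k >= 1 : w_i[k] = True for all i } *)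
    0 < K /\ (forall i, ws E K i) /\
    (forall k, 0 < k < K -> exists i, ~~ ws E k i) /\
    (* S_i^* = z_i[K] is the vertex set of the SCC containing v_i *)
    (forall i, zs E K i = scc_of E i /\ is_scc E (zs E K i)) /\
    (* consequences *)
    (forall i j, zs E K i = zs E K j \/ [disjoint zs E K i & zs E K j]) /\
    (forall S : {set V}, is_scc E S -> exists i, S = zs E K i) /\
    \bigcup_i zs E K i = [set: V] /\
    [set p : V * V | [exists i, (p.1 \in zs E K i) && (p.2 \in zs E K i)
                                && E p.1 p.2]]
      \subset [set p : V * V | E p.1 p.2].
Proof.
have exP : exists k, (0 < k) && [forall i, ws E k i].
  by have [k Hk] := stab_ex E; exists k.+1.
case: (ex_minnP exP) => K /andP[K0 HK] Hmin.
exists K.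
have Hmin' : forall k, 0 < k < K -> exists i, ~~ ws E k i.
  move=> k /andP[k0 kK]; case Hf: [forall i, ws E k i].
    by have := Hmin k; rewrite k0 Hf => /(_ isT); rewrite leqNgt kK.
  by move/negbT: Hf; rewrite negb_forall => /existsP.
case: K K0 HK Hmin Hmin' => [//|k] _ HK _ Hmin'.
have Hst : forall i, xs E k.+1 i = xs E k i.
  by move=> i; move/forallP: HK => /(_ i); rewrite ws_eq => /eqP.
have A0 := xs_fix_anc Hst.
have A1 : forall i, xs E k.+1 i = [set u | connect E u i] by move=> i; rewrite Hst.
have Hz : forall i, zs E k.+1 i = scc_of E i.
  move=> i; rewrite zs_eq; apply/setP => j; rewrite !inE A0 A1 inE.
  apply/andP/andP => [[/eqP Hc Hji]|[Hij Hji]].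
    have Hsub : [set u | connect E u j] \subset [set u | connect E u i].
      by apply/subsetP => u; rewrite !inE => Hu; exact: connect_trans Hu Hji.
    have : [set u | connect E u j] == [set u | connect E u i] by rewrite eqEcard Hsub Hc leqnn.
    move/eqP => Heq; have : i \in [set u | connect E u j] by rewrite Heq inE connect0.
    by rewrite inE => ->.
  split=> //; suff -> : [set u | connect E u i] = [set u | connect E u j] by [].
  apply/setP => u; rewrite !inE; apply/idP/idP => Hu; [exact: connect_trans Hu Hij | exact: connect_trans Hu Hji].
split=> //; split; first by move=> i; move/forallP: HK.
split=> //.
split; first by move=> i; rewrite Hz; split=> //; exact: scc_is.
split; first by move=> i j; rewrite !Hz; exact: scc_dis.
split; first by move=> S /scc_all [i ->]; exists i; rewrite Hz.
split.
  apply/setP => u; rewrite inE; apply/bigcupP; exists u => //; rewrite Hz; exact: scc_in.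
by apply/subsetP => p; rewrite !inE => /existsP [i /andP[_ ->]].
Qed.
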